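(* (a) There exist compatible t-pairs $\tau_1^1,\tau_2^1$ and a union $\tau^1$ of them such that $\operatorname{typ}_u(\tau_1^1)=\operatorname{typ}_u(\tau_2^1)=\operatorname{typ}_u(\tau^1)=t_5$. (b) There exist compatible t-pairs $\tau_1^2,\tau_2^2$ and a union $\tau^2$ of them such that $\operatorname{typ}_u(\tau_1^2)=\operatorname{typ}_u(\tau_2^2)=t_5$ and $\operatorname{typ}_u(\tau^2)=t_6$.
   Context: Let $\mathbb{N}=\{0,1,2,\dots\}$; for an integer $k\ge 2$ let $E_k=\{0,1,\dots,k-1\}$; let $\mathcal{P}(\mathbb{N})$ be the set of nonempty finite subsets of $\mathbb{N}$. Let $F$ be a nonempty set (of attribute names). A decision table $T\in\mathcal{M}_k(F)$ is a rectangular table with $n\ge 1$ columns labeled with attributes $f_1,\dots,f_n\in F$ (any two columns labeled with the same attribute are equal), whose rows are pairwise different tuples from $E_k^n$ (the set of rows may be empty), each row being labeled with a set of decisions from $\mathcal{P}(\mathbb{N})$. Write $At(T)=\{f_1,\dots,f_n\}$ and $\Delta(T)$ for the set of rows. For a word $\alpha=(f_{i_1},\delta_1)\cdots(f_{i_m},\delta_m)$ with $f_{i_j}\in At(T)$, $\delta_j\in E_k$, the subtable $T\alpha$ consists of the rows of $T$ having value $\delta_j$ in column $f_{i_j}$ for all $j$ ($T\lambda=T$ for the empty word $\lambda$). Operations on tables: (1) removal of a column from a table with at least two columns (if groups of equal rows appear, only the first row of each group, with its decision set, is kept); (2) changing of decisions: the decision sets attached to rows are replaced arbitrarily by sets from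 $\mathcal{P}(\mathbb{N})$; (3) permutation of columns: swap two columns together with their attribute labels; (4) duplication of columns: add a copy of a column (with its label) next to it. A set $\mathcal{C}\subseteq\mathcal{M}_k(F)$ is a closed class if every table obtained from a table of $\mathcal{C}$ by finitely many such operations belongs to $\mathcal{C}$. A decision tree over $\mathcal{M}_k(F)$ is a finite directed tree with a root (unique node with no entering edge) and at least two nodes such that the root and the edges leaving the root are unlabeled, each worker node (neither root nor terminal) is labeled with an attribute from $F$, each edge leaving a worker node is labeled with a number from $E_k$, and each terminal node is labeled with a number from $\mathbb{N}$. For a complete path $\xi$ (root to terminal node) whose worker nodes are labeled $f_{j_1},\dots,f_{j_m}$ in order, with the edges leaving them labeled $\delta_1,\dots,\delta_m$, put $\pi(\xi)=(f_{j_1},\delta_1)\cdots(f_{j_m},\delta_m)$, $\varphi(\xi)=f_{j_1}\cdots f_{j_m}$ (both empty if $m=0$), and let $\tau(\xi)$ be the label of its terminal node. A nondeterministic decision tree for $T$ is a decision tree $\Gamma$ whose worker-node attributes lie in $At(T)$, such that $\bigcup_{\xi}\Delta(T\pi(\xi))=\Delta(T)$ (union over complete paths), and for every row $r\in\Delta(T)$ and every complete path $\xi$ with $r\in\Delta(T\pi(\xi))$, $\tau(\xi)$ belongs to the decision set of $r$. A decision tree is deterministic if exactly one edge leaves the root and the edges leaving each worker node have pairwise different labels; a deterministic decision tree for $T$ is a deterministic decision tree that is a nondeterministic decision tree for $T$. A complexity measure over $\mathcal{M}_k(F)$ is any map $\psi:F^*\to\mathbb{N}$, where $F^*$ is the set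 of finite words over $F$ including the empty word $\lambda$. For a tree, $\psi(\Gamma)=\max_\xi\psi(\varphi(\xi))$ over complete paths. For $T$ with columns labeled $f_1,\dots,f_n$: $\psi^i(T)=\psi(f_1\cdots f_n)$, $\psi^d(T)$ is the minimum complexity of a deterministic decision tree for $T$, $\psi^a(T)$ the minimum complexity of a nondeterministic decision tree for $T$. A t-pair $(\mathcal{C},\psi)$ consists of a closed class $\mathcal{C}\subseteq\mathcal{M}_k(F)$ and a complexity measure $\psi$ over $\mathcal{M}_k(F)$. For $b,c\in\{i,d,a\}$ define the partial function $\mathcal{U}^{bc}_{\mathcal{C}\psi}(n)=\max\{\psi^b(T):T\in\mathcal{C},\psi^c(T)\le n\}$ (defined iff this set is nonempty and finite). For a partial function $g:\mathbb{N}\to\mathbb{N}$ with domain $\mathrm{Dom}(g)$, let $\mathrm{Dom}^+(g)=\{n\in\mathrm{Dom}(g):g(n)\ge n\}$, $\mathrm{Dom}^-(g)=\{n\in\mathrm{Dom}(g):g(n)\le n\}$. Its type $\operatorname{typ}(g)$ is: $\alpha$ if $\mathrm{Dom}(g)$ is infinite and $g$ is bounded above; $\beta$ if $\mathrm{Dom}(g)$ is infinite, $\mathrm{Dom}^+(g)$ is finite and $g$ is unbounded above; $\gamma$ if $\mathrm{Dom}^+(g)$ and $\mathrm{Dom}^-(g)$ are both infinite; $\delta$ if $\mathrm{Dom}(g)$ is infinite and $\mathrm{Dom}^-(g)$ is finite; $\epsilon$ if $\mathrm{Dom}(g)$ is finite. The upper type $\operatorname{typ}_u(\mathcal{C},\psi)$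 is the $3\times 3$ table with rows and columns indexed by $i,d,a$ (in this order) whose entry in row $b$, column $c$ is $\operatorname{typ}(\mathcal{U}^{bc}_{\mathcal{C}\psi})$. Row by row (rows $i,d,a$; entries in columns $i,d,a$): $t_5$: $i:(\gamma,\epsilon,\epsilon)$; $d:(\gamma,\gamma,\gamma)$; $a:(\gamma,\gamma,\gamma)$. $t_6$: $i:(\gamma,\epsilon,\epsilon)$; $d:(\gamma,\gamma,\delta)$; $a:(\gamma,\gamma,\gamma)$. Union: t-pairs $\tau_1=(\mathcal{C}_1,\psi_1)$ with $\mathcal{C}_1\subseteq\mathcal{M}_{k_1}(F_1)$ and $\tau_2=(\mathcal{C}_2,\psi_2)$ with $\mathcal{C}_2\subseteq\mathcal{M}_{k_2}(F_2)$ are compatible if $F_1\cap F_2=\varnothing$ and $\psi_1(\lambda)=\psi_2(\lambda)$. A union of them is a t-pair $(\mathcal{C},\psi)$ with $\mathcal{C}=\mathcal{C}_1\cup\mathcal{C}_2\subseteq\mathcal{M}_{\max(k_1,k_2)}(F_1\cup F_2)$ and $\psi:(F_1\cup F_2)^*\to\mathbb{N}$ any map with $\psi(\alpha)=\psi_1(\alpha)$ for $\alpha\in F_1^*$, $\psi(\alpha)=\psi_2(\alpha)$ for $\alpha\in F_2^*$, and arbitrary values on words containing letters from both $F_1$ and $F_2$. *)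

(* Defs.v *)
From Stdlib Require List.
From HB Require Import structures.
From mathcomp Require Import all_boot finmap.
Set Implicit Arguments. Unset Strict Implicit. Unset Printing Implicit Defensive.

Local Open Scope fset_scope.

Section Tables.
Variable A : Type.

(* A decision table: the list of column labels f_1..f_n and the list of
   rows (in order); each row is a tuple of values together with its
   (finite) decision set. *)
Record table := Table { cols : seq A ; rows : seq (seq nat * {fset nat}) }.

Definition in_M (k : nat) (F : A -> Prop) (T : table) : Prop :=
  0 < size (cols T) /\
  (forall f, List.In f (cols T) -> F f) /\
  (forall r, r \in rows T -> size r.1 = size (cols T) /\ all (fun x => x < k) r.1) /\
  uniq (map fst (rows T)) /\
  (forall r, r \in rows T -> r.2 != fset0) /\
  (forall i j f, List.nth_error (cols T) i = Some f ->
     List.nth_error (cols T) j = Some f ->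
     forall r, r \in rows T -> nth 0 r.1 i = nth 0 r.1 j).

Definition rem_at (X : Type) (i : nat) (s : seq X) : seq X := take i s ++ drop i.+1 s.
Definition dup_at (X : Type) (i : nat) (s : seq X) : seq X := take i.+1 s ++ drop i s.
Definition swap_seq (X : Type) (i j : nat) (s : seq X) : seq X :=
  pmap (fun m => List.nth_error s (if m == i then j else if m == j then i else m))
       (iota 0 (size s)).

Fixpoint dedup_acc (seen : seq (seq nat)) (s : seq (seq nat * {fset nat}))
  : seq (seq nat * {fset nat}) :=
  match s with
  | [::] => [::]
  | r :: s' => if r.1 \in seen then dedup_acc seen s' else r :: dedup_acc (r.1 :: seen) s'
  end.

Inductive op_step (T : table) : table -> Prop :=
| OpRemove i : 1 < size (cols T) -> i < size (cols T) ->
    op_step T (Table (rem_at i (cols T))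
                     (dedup_acc [::] [seq (rem_at i r.1, r.2) | r <- rows T]))
| OpChange rs : map fst rs = map fst (rows T) -> (forall r, r \in rs -> r.2 != fset0) ->
    op_step T (Table (cols T) rs)
| OpSwap i j : i < size (cols T) -> j < size (cols T) ->
    op_step T (Table (swap_seq i j (cols T)) [seq (swap_seq i j r.1, r.2) | r <- rows T])
| OpDup i : i < size (cols T) ->
    op_step T (Table (dup_at i (cols T)) [seq (dup_at i r.1, r.2) | r <- rows T]).

Inductive op_star (T : table) : table -> Prop :=
| OpRefl : op_star T T
| OpStep T1 T2 : op_star T T1 -> op_step T1 T2 -> op_star T T2.

Definition closed_class (k : nat) (F : A -> Prop) (C : table -> Prop) : Prop :=
  (forall T, C T -> in_M k F T) /\ (forall T T', C T -> op_star T T' -> C T').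

(* A decision tree
   is the list of subtrees hanging from the (unlabelled) root. *)
Inductive node := Term of nat | Work of A & seq (nat * node).

Inductive wf_node (k : nat) (P : A -> Prop) : node -> Prop :=
| WfTerm d : wf_node k P (Term d)
| WfWork f ch : P f -> ch <> [::] ->
    (forall e t, List.In (e, t) ch -> e < k /\ wf_node k P t) -> wf_node k P (Work f ch).

Inductive det_node : node -> Prop :=
| DTerm d : det_node (Term d)
| DWork f ch : uniq (map fst ch) -> (forall e t, List.In (e, t) ch -> det_node t) ->
    det_node (Work f ch).

Definition det_tree (G : seq node) : Prop :=
  size G = 1 /\ forall t, List.In t G -> det_node t.

Inductive npath : node -> seq (A * nat) -> nat -> Prop :=
| NPTerm d : npath (Term d) [::] d
| NPWork f ch e t w d : List.In (e, t) ch -> npath t w d ->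
    npath (Work f ch) ((f, e) :: w) d.

Definition tpath (G : seq node) (w : seq (A * nat)) (d : nat) : Prop :=
  exists t, List.In t G /\ npath t w d.

Definition sat (T : table) (v : seq nat) (w : seq (A * nat)) : Prop :=
  forall p, List.In p w ->
    exists i, List.nth_error (cols T) i = Some p.1 /\ nth 0 v i = p.2.

Definition ndtree_for (k : nat) (T : table) (G : seq node) : Prop :=
  G <> [::] /\
  (forall t, List.In t G -> wf_node k (fun f => List.In f (cols T)) t) /\
  (forall r, r \in rows T -> exists w d, tpath G w d /\ sat T r.1 w) /\
  (forall r w d, r \in rows T -> tpath G w d -> sat T r.1 w -> d \in r.2).

Definition dtree_for (k : nat) (T : table) (G : seq node) : Prop :=
  ndtree_for k T G /\ det_tree G.

Definition tree_cplx (psi : seq A -> nat) (G : seq node) (m : nat) : Prop :=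
  (exists w d, tpath G w d /\ psi (map fst w) = m) /\
  (forall w d, tpath G w d -> psi (map fst w) <= m).

Definition psi_d (k : nat) (psi : seq A -> nat) (T : table) (m : nat) : Prop :=
  (exists G, dtree_for k T G /\ tree_cplx psi G m) /\
  (forall G m', dtree_for k T G -> tree_cplx psi G m' -> m <= m').

Definition psi_a (k : nat) (psi : seq A -> nat) (T : table) (m : nat) : Prop :=
  (exists G, ndtree_for k T G /\ tree_cplx psi G m) /\
  (forall G m', ndtree_for k T G -> tree_cplx psi G m' -> m <= m').

End Tables.

Inductive cm := MI | MD | MA.

Definition cplx (A : Type) (k : nat) (psi : seq A -> nat) (b : cm) (T : table A) (m : nat)
  : Prop :=
  match b with
  | MI => psi (cols T) = m
  | MD => psi_d k psi T m
  | MA => psi_a k psi T m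
  end.

Definition Uset (A : Type) (k : nat) (C : table A -> Prop) (psi : seq A -> nat)
  (b c : cm) (n m : nat) : Prop :=
  exists T, C T /\ cplx k psi b T m /\ exists m', cplx k psi c T m' /\ m' <= n.

(* graph of the partial function U^{bc}: U n v iff the set is nonempty,
   finite and its maximum is v *)
Definition U (A : Type) (k : nat) (C : table A -> Prop) (psi : seq A -> nat)
  (b c : cm) (n v : nat) : Prop :=
  Uset k C psi b c n v /\ forall m, Uset k C psi b c n m -> m <= v.

Inductive typ := TAlpha | TBeta | TGamma | TDelta | TEps.

Definition inf_set (P : nat -> Prop) : Prop := forall N, exists n, N <= n /\ P n.
Definition fin_set (P : nat -> Prop) : Prop := exists N, forall n, P n -> n < N.

Definition Dom (g : nat -> nat -> Prop) (n : nat) : Prop := exists v, g n v.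
Definition Domp (g : nat -> nat -> Prop) (n : nat) : Prop := exists v, g n v /\ n <= v.
Definition Domm (g : nat -> nat -> Prop) (n : nat) : Prop := exists v, g n v /\ v <= n.
Definition bounded_above (g : nat -> nat -> Prop) : Prop :=
  exists B, forall n v, g n v -> v <= B.

Definition has_typ (g : nat -> nat -> Prop) (t : typ) : Prop :=
  match t with
  | TAlpha => inf_set (Dom g) /\ bounded_above g
  | TBeta => inf_set (Dom g) /\ fin_set (Domp g) /\ ~ bounded_above g
  | TGamma => inf_set (Domp g) /\ inf_set (Domm g)
  | TDelta => inf_set (Dom g) /\ fin_set (Domm g)
  | TEps => fin_set (Dom g)
  end.

Definition typ_u_is (A : Type) (k : nat) (C : table A -> Prop) (psi : seq A -> nat)
  (t : cm -> cm -> typ) : Prop :=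
  forall b c, has_typ (U k C psi b c) (t b c).

Definition t5 (b c : cm) : typ :=
  match b, c with
  | MI, MI => TGamma | MI, _ => TEps
  | _, _ => TGamma
  end.

Definition t6 (b c : cm) : typ :=
  match b, c with
  | MI, MI => TGamma | MI, _ => TEps
  | MD, MA => TDelta
  | _, _ => TGamma
  end.

Definition tpair (A : Type) (k : nat) (F : A -> Prop) (C : table A -> Prop)
  (psi : seq A -> nat) : Prop :=
  2 <= k /\ (exists f, F f) /\ closed_class k F C.

Definition compatible (A : Type) (F1 F2 : A -> Prop) (psi1 psi2 : seq A -> nat) : Prop :=
  (forall f, F1 f -> F2 f -> False) /\ psi1 [::] = psi2 [::].

Definition word_over (A : Type) (F : A -> Prop) (w : seq A) : Prop :=
  forall f, List.In f w -> F f.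

Definition is_union (A : Type)
  (k1 : nat) (F1 : A -> Prop) (C1 : table A -> Prop) (psi1 : seq A -> nat)
  (k2 : nat) (F2 : A -> Prop) (C2 : table A -> Prop) (psi2 : seq A -> nat)
  (C : table A -> Prop) (psi : seq A -> nat) : Prop :=
  tpair (maxn k1 k2) (fun f => F1 f \/ F2 f) C psi /\
  (forall T, C T <-> C1 T \/ C2 T) /\
  (forall w, word_over F1 w -> psi w = psi1 w) /\
  (forall w, word_over F2 w -> psi w = psi2 w).

(* Main.v *)
Require Import Defs.
From mathcomp Require Import all_boot finmap.
From Stdlib Require Import Classical Lia.
From mathcomp Require Import zify.
Set Implicit Arguments. Unset Strict Implicit. Unset Printing Implicit Defensive.

Notation A := (nat * nat)%type.



Lemma In_mem (T : eqType) (x : T) (s : seq T) : List.In x s <-> x \in s.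
Proof.
elim: s => [|y s IH] //=; rewrite in_cons; split.
- by case=> [->|/IH ->]; rewrite ?eqxx ?orbT.
- by case/orP=> [/eqP ->|/IH]; auto.
Qed.

Lemma nth_error_nth (T : Type) (s : seq T) i x x0 :
  List.nth_error s i = Some x -> i < size s /\ nth x0 s i = x.
Proof.
elim: s i => [|y s IH] [|i] //=; first by case.
by move=> /IH [? ?].
Qed.

Lemma nth_error_map (T U : Type) (a : T -> U) s k :
  List.nth_error (map a s) k = omap a (List.nth_error s k).
Proof. by elim: s k => [|y s IH] [|k] //=. Qed.

Lemma nth_error_In' (T : Type) (s : seq T) i x : List.nth_error s i = Some x -> List.In x s.
Proof. exact: List.nth_error_In. Qed.

Lemma nth_map_err (a : A -> nat) s i f :
  List.nth_error s i = Some f -> nth 0 (map a s) i = a f.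
Proof. elim: s i => [|y s IH] [|i] //=; [by case=> -> | exact: IH]. Qed.

Lemma rem_at_map (a : A -> nat) i s : rem_at i (map a s) = map a (rem_at i s).
Proof. by rewrite /rem_at map_cat map_take map_drop. Qed.

Lemma dup_at_map (a : A -> nat) i s : dup_at i (map a s) = map a (dup_at i s).
Proof. by rewrite /dup_at map_cat map_take map_drop. Qed.

Lemma pmap_omap (T U : Type) (a : T -> U) (g : nat -> option T) l :
  pmap (fun m => omap a (g m)) l = map a (pmap g l).
Proof. by elim: l => [|m l IH] //=; case: (g m) => [x|] //=; rewrite IH. Qed.

Lemma swap_seq_map (a : A -> nat) i j s : swap_seq i j (map a s) = map a (swap_seq i j s).
Proof.
rewrite /swap_seq size_map -pmap_omap.
by apply: eq_pmap => m; rewrite nth_error_map.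
Qed.

Lemma In_drop_S (T : Type) i (s : seq T) x : List.In x (drop i.+1 s) -> List.In x (drop i s).
Proof.
move=> H; rewrite -(cat_take_drop 1 (drop i s)) drop_drop add1n.
by apply: List.in_or_app; right.
Qed.

Lemma In_rem_at (T : Type) i (s : seq T) x : List.In x (rem_at i s) -> List.In x s.
Proof.
rewrite /rem_at => H0; case: (List.in_app_or _ _ _ H0) => H; rewrite -(cat_take_drop i s);
  apply: List.in_or_app; first by left.
by right; apply: In_drop_S.
Qed.

Lemma In_dup_at (T : Type) i (s : seq T) x : List.In x (dup_at i s) -> List.In x s.
Proof.
rewrite /dup_at => H0; case: (List.in_app_or _ _ _ H0) => H.
- by rewrite -(cat_take_drop i.+1 s); apply: List.in_or_app; left.
- by rewrite -(cat_take_drop i s); apply: List.in_or_app; right.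
Qed.

Lemma In_dup_at' (T : Type) i (s : seq T) x : List.In x s -> List.In x (dup_at i s).
Proof.
rewrite /dup_at -{1}(cat_take_drop i.+1 s) => H0; case: (List.in_app_or _ _ _ H0) => H;
  apply: List.in_or_app; first by left.
by right; apply: In_drop_S.
Qed.

Lemma pmap_In (T : Type) (g : nat -> option T) l x :
  List.In x (pmap g l) <-> exists m, List.In m l /\ g m = Some x.
Proof.
elim: l => [|m l IH] /=; first by split => // [[m []]].
case E: (g m) => [y|] /=; split.
- case=> [<-|/IH [m' [? ?]]]; [by exists m; auto | by exists m'; auto].
- case=> m' [[<-|H] H']; first by left; congruence.
  by right; apply/IH; exists m'.
- by move/IH => [m' [? ?]]; exists m'; auto.
- case=> m' [[<-|H] H']; first by congruence.
  by apply/IH; exists m'.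
Qed.

Lemma In_iota m n x : List.In x (iota m n) <-> m <= x < m + n.
Proof. by rewrite In_mem mem_iota. Qed.

Lemma In_swap (T : Type) i j (s : seq T) x : List.In x (swap_seq i j s) -> List.In x s.
Proof. rewrite /swap_seq => /pmap_In [m [_ H]]; exact: List.nth_error_In H. Qed.

Lemma In_swap' (T : Type) i j (s : seq T) x : i < size s -> j < size s ->
  List.In x s -> List.In x (swap_seq i j s).
Proof.
move=> Hi Hj H; case: (List.In_nth_error _ _ H) => p Hp.
have Hps : p < size s by case: (nth_error_nth x Hp).
rewrite /swap_seq; apply/pmap_In.
exists (if p == i then j else if p == j then i else p); split.
- apply/In_iota; rewrite add0n /=.
  by case: (p == i) => //; case: (p == j).
- case: (eqVneq p i) => [Epi|Hpi].
    + rewrite eqxx; case: ifP => [/eqP Eji|_]; first by rewrite Eji -Epi.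
      by rewrite -Epi.
    + case: (eqVneq p j) => [Epj|Hpj].
      * by rewrite eqxx -Epj.
      * rewrite (negbTE Hpi) (negbTE Hpj) //.
Qed.



Definition blk (S : nat -> bool) (T : table A) (n : nat) :=
  S n /\ forall f, List.In f (cols T) -> f.1 = n.

Definition CS (S : nat -> bool) (T : table A) : Prop :=
  0 < size (cols T) /\ (exists n, blk S T n) /\
  (forall r, r \in rows T -> exists a : A -> nat, (forall f, a f < 2) /\ r.1 = map a (cols T)) /\
  uniq (map fst (rows T)) /\ (forall r, r \in rows T -> r.2 != fset0).

Lemma dedup_sub (seen : seq (seq nat)) s x : x \in dedup_acc seen s -> x \in s.
Proof.
elim: s seen => [|y s IH] seen //=.
case: ifP => _; first by move/IH; rewrite in_cons orbC => ->.
by rewrite !in_cons => /orP [->|/IH ->] //; rewrite orbT.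
Qed.

Lemma dedup_uniq (seen : seq (seq nat)) s :
  uniq (map fst (dedup_acc seen s)) /\
  (forall y, y \in map fst (dedup_acc seen s) -> y \notin seen).
Proof.
elim: s seen => [|z s IH] seen //=.
case: ifP => Hz; first exact: IH.
have [U1 U2] := IH (z.1 :: seen).
split.
- rewrite /= U1 andbT; apply/negP => /U2; by rewrite in_cons eqxx.
- move=> y; rewrite in_cons => /orP [/eqP ->|/U2]; first by rewrite Hz.
  by rewrite in_cons negb_or => /andP [].
Qed.

Lemma CS_inM (S : nat -> bool) (F : A -> Prop) T : (forall f, S f.1 -> F f) -> CS S T -> in_M 2 F T.
Proof.
move=> HF [H0 [[n [Sn Hb]] [Hr [Hu Hd]]]].
split=> //; split; first by move=> f /Hb Hf; apply: HF; rewrite Hf.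
split.
  move=> r /Hr [a [Ha ->]]; rewrite size_map; split=> //.
  by apply/allP => x /mapP [y _ ->].
split=> //; split=> //.
move=> i j f Hi Hj r /Hr [a [_ ->]].
by rewrite (nth_map_err a Hi) (nth_map_err a Hj).
Qed.

Lemma CS_step (S : nat -> bool) T T' : CS S T -> op_step T T' -> CS S T'.
Proof.
move=> [H0 [[n [Sn Hb]] [Hr [Hu Hd]]]]; case=> /=.
- move=> i H1 Hi; split; first by rewrite /rem_at size_cat size_take size_drop Hi; 
    rewrite -subn_gt0 in H1 *; move: H1 Hi; clear; lia.
  split; first by exists n; split=> // f Hf; apply: Hb; exact: In_rem_at Hf.
  split; first by move=> r /dedup_sub /mapP [r0 /Hr [a [Ha E]] ->]; exists a; rewrite /= E rem_at_map.
  split; first by case: (dedup_uniq [::] [seq (rem_at i r.1, r.2) | r <- rows T]).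
  by move=> r /dedup_sub /mapP [r0 /Hd H ->].
- move=> rs Hrs Hd'; split=> //; split; first by exists n.
  split=> //; last by rewrite Hrs.
  move=> r Hr'; have : r.1 \in map fst rs by apply: map_f.
  by rewrite Hrs => /mapP [r0 /Hr [a [Ha E]] ->]; exists a.
- move=> i j Hi Hj.
  have Hin : forall x, List.In x (cols T) -> List.In x (swap_seq i j (cols T)).
    by move=> x; apply: In_swap'.
  split.
    case E: (cols T) H0 Hin => [|c cs] //= _ Hin.
    by case: (swap_seq i j (c :: cs)) (Hin c (or_introl erefl)).
  split; first by exists n; split=> // f Hf; apply: Hb; exact: In_swap Hf.
  split; first by move=> r /mapP [r0 /Hr [a [Ha E]] ->]; exists a; rewrite /= E swap_seq_map.
  split; last by move=> r /mapP [r0 /Hd H ->].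
  rewrite -map_comp (map_comp (swap_seq i j) fst) map_inj_in_uniq //.
  move=> x y /mapP [rx /Hr [a [_ Ea]] ->] /mapP [ry /Hr [b [_ Eb]] ->].
  rewrite Ea Eb !swap_seq_map => E; apply/eq_in_map => z /In_mem /Hin /In_mem Hz.
  by move: E => /(congr1 (fun s => nth 0 s (index z (swap_seq i j (cols T))))); 
    rewrite !(nth_map (0,0)) ?index_mem // nth_index.
- move=> i Hi.
  have Hin : forall x, List.In x (cols T) -> List.In x (dup_at i (cols T)) by move=> x; apply: In_dup_at'.
  split.
    by case E: (cols T) H0 Hin => [|c cs] //=.
  split; first by exists n; split=> // f Hf; apply: Hb; exact: In_dup_at Hf.
  split; first by move=> r /mapP [r0 /Hr [a [Ha E]] ->]; exists a; rewrite /= E dup_at_map.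
  split; last by move=> r /mapP [r0 /Hd H ->].
  rewrite -map_comp (map_comp (dup_at i) fst) map_inj_in_uniq //.
  move=> x y /mapP [rx /Hr [a [_ Ea]] ->] /mapP [ry /Hr [b [_ Eb]] ->].
  rewrite Ea Eb !dup_at_map => E; apply/eq_in_map => z /In_mem /Hin /In_mem Hz.
  by move: E => /(congr1 (fun s => nth 0 s (index z (dup_at i (cols T))))); 
    rewrite !(nth_map (0,0)) ?index_mem // nth_index.
Qed.

Lemma CS_star (S : nat -> bool) T T' : CS S T -> op_star T T' -> CS S T'.
Proof. by move=> H; elim=> // T1 T2 _ IH /(CS_step IH). Qed.

Lemma CS_closed (S : nat -> bool) (F : A -> Prop) :
  (forall f, S f.1 -> F f) -> closed_class 2 F (CS S).
Proof. by move=> HF; split=> [T|T T']; [apply: CS_inM | apply: CS_star]. Qed.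



Definition psi (w : seq A) : nat :=
  match w with [::] => 0 | [:: f] => f.1 | f :: _ => f.1.+1 end.

Lemma psi_blk n (ws : seq A) : (forall f, List.In f ws -> f.1 = n) ->
  psi ws = match ws with [::] => 0 | [:: _] => n | _ => n.+1 end.
Proof.
case: ws => [|f [|g ws]] //= H; by rewrite H //; left.
Qed.

Lemma sat_In (T : table A) v w p : sat T v w -> List.In p w -> List.In p.1 (cols T).
Proof. move=> H /H [i [Hi _]]; exact: List.nth_error_In Hi. Qed.

Lemma sat_nil (T : table A) v : sat T v [::].
Proof. by []. Qed.

Lemma wf_letters k (P : A -> Prop) t w d : npath t w d -> wf_node k P t ->
  forall p, List.In p w -> P p.1.
Proof.
elim=> {t w d} [d|f ch e t w d Hin _ IH] //= Hwf p.
inversion Hwf; subst => -[<-|Hp] //.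
apply: IH => //; by case: (H3 _ _ Hin).
Qed.

Lemma tree_letters (T : table A) G w d : ndtree_for 2 T G -> tpath G w d ->
  forall f, List.In f (map fst w) -> List.In f (cols T).
Proof.
move=> [_ [Hwf _]] [t [Ht Hp]] f.
move/List.in_map_iff: (f) => H /H [p [<- Hp']].
exact: (wf_letters Hp (Hwf _ Ht)).
Qed.

Lemma tree_vals (S : nat -> bool) (T : table A) n G m : blk S T n -> ndtree_for 2 T G ->
  tree_cplx psi G m -> m = 0 \/ m = n \/ m = n.+1.
Proof.
move=> [_ Hb] Hnd [[w [d [Hp <-]]] _].
rewrite (psi_blk (n := n)); last by move=> f /(tree_letters Hnd Hp) /Hb.
by case: (map fst w) => [|? [|? ?]]; auto.
Qed.

Lemma cplx_vals (S : nat -> bool) (T : table A) n b m : blk S T n -> b <> MI ->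
  cplx 2 psi b T m -> m = 0 \/ m = n \/ m = n.+1.
Proof.
move=> Hb; case: b => //= _.
- by move=> [[G [[Hnd _] Hc]] _]; exact: tree_vals Hb Hnd Hc.
- by move=> [[G [Hnd Hc]] _]; exact: tree_vals Hb Hnd Hc.
Qed.

Lemma a_le_d (T : table A) a d : psi_a 2 psi T a -> psi_d 2 psi T d -> a <= d.
Proof. by move=> [_ Ha] [[G [[Hnd _] Hc]] _]; exact: Ha Hnd Hc. Qed.

Lemma cplx_uniq (T : table A) b m m' : cplx 2 psi b T m -> cplx 2 psi b T m' -> m = m'.
Proof.
case: b => /=; first by move=> -> ->.
- move=> [[G [HG HcG]] H] [[G' [HG' HcG']] H'].
  by apply/eqP; rewrite eqn_leq (H _ _ HG' HcG') (H' _ _ HG HcG).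
- move=> [[G [HG HcG]] H] [[G' [HG' HcG']] H'].
  by apply/eqP; rewrite eqn_leq (H _ _ HG' HcG') (H' _ _ HG HcG).
Qed.

Lemma L_nonempty (S : nat -> bool) (T : table A) n r1 r2 G m :
  blk S T n -> r1 \in rows T -> r2 \in rows T ->
  (forall d, d \in r1.2 -> d \in r2.2 -> False) ->
  ndtree_for 2 T G -> tree_cplx psi G m -> n <= m.
Proof.
move=> [_ Hb] H1 H2 Hdis Hnd [_ Hall].
have [_ [_ [Hcov Hcor]]] := Hnd.
have [w [d [Hp Hs]]] := Hcov _ H1.
have Hd1 := Hcor _ _ _ H1 Hp Hs.
case E: w Hp Hs => [|p w'] Hp Hs.
  by case: (Hdis d Hd1 (Hcor _ _ _ H2 Hp (sat_nil T r2.1))).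
have := Hall _ _ Hp.
rewrite (psi_blk (n := n)); last by move=> f /(tree_letters Hnd Hp) /Hb.
by case: w' {E Hp Hs} => [|? ?] /=; lia.
Qed.

Lemma npath_term d w d' : npath (Term A d) w d' -> w = [::] /\ d' = d.
Proof. by move=> H; inversion H. Qed.

Lemma trivial_tree (T : table A) d : (forall r, r \in rows T -> d \in r.2) ->
  dtree_for 2 T [:: Term A d] /\ tree_cplx psi [:: Term A d] 0.
Proof.
move=> Hd.
have Hp : forall w d', tpath [:: Term A d] w d' -> w = [::] /\ d' = d.
  by move=> w d' [t [[<-|[]] H]]; exact: npath_term.
split; last first.
  split; first by exists [::], d; split => //; exists (Term A d); split; [left|constructor].
  by move=> w d' /Hp [-> _].
split; last by split => // t [<-|[]]; constructor.
split => //; split; first by move=> t [<-|[]]; constructor.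
split; first by move=> r _; exists [::], d; split => //; exists (Term A d); split; [left|constructor].
by move=> r w d' Hr /Hp [_ ->] _; exact: Hd.
Qed.

Lemma F2 (S : nat -> bool) (T : table A) n m : (forall k, S k -> 0 < k) -> CS S T -> blk S T n ->
  psi_a 2 psi T 0 -> psi_d 2 psi T m -> m = 0.
Proof.
move=> HS HC [Sn Hb] [[G [Hnd [_ Hall]]] _] [_ Hmin].
have Hn := HS _ Sn.
suff [d Hd] : exists d, forall r, r \in rows T -> d \in r.2.
  have [H1 H2] := trivial_tree Hd.
  by apply/eqP; rewrite -leqn0; exact: Hmin H1 H2.
case E: (rows T) => [|r0 rs]; first by exists 0.
have [_ [_ [Hcov Hcor]]] := Hnd.
have Hr0 : r0 \in rows T by rewrite E mem_head.
have [w [d [Hp Hs]]] := Hcov _ Hr0.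
exists d => r Hr; rewrite -E in Hr.
case Ew: w Hp Hs => [|p w'] Hp Hs.
  exact: Hcor _ _ _ Hr Hp (sat_nil T r.1).
have := Hall _ _ Hp.
rewrite (psi_blk (n := n)); last by move=> f /(tree_letters Hnd Hp) /Hb.
by case: w' {Ew Hp Hs} => [|? ?] /=; lia.
Qed.

Lemma uniq_fst (s : seq (seq nat * {fset nat})) x y :
  uniq (map fst s) -> x \in s -> y \in s -> x.1 = y.1 -> x = y.
Proof.
elim: s => [|z s IH] //= /andP [Hz Hu].
rewrite !in_cons => /orP [/eqP ->|Hx] /orP [/eqP ->|Hy] // E.
- by move: Hz; rewrite E (map_f fst Hy).
- by move: Hz; rewrite -E (map_f fst Hx).
- exact: IH.
Qed.

Lemma dec_exists (T : table A) (v : seq nat) : uniq (map fst (rows T)) ->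
  (forall r, r \in rows T -> r.2 != fset0) ->
  exists d, forall r, r \in rows T -> r.1 = v -> d \in r.2.
Proof.
move=> Hu Hd.
case: (classic (exists r, r \in rows T /\ r.1 = v)) => [[r0 [H0 E0]]|Hn].
- have /fset0Pn [d Hd0] := Hd _ H0.
  exists d => r Hr Er; by rewrite (uniq_fst Hu Hr H0) ?Er.
- by exists 0 => r Hr Er; case: Hn; exists r.
Qed.

Lemma nth_error_single (T : Type) (f g : T) i : List.nth_error [:: f] i = Some g -> i = 0 /\ g = f.
Proof. by case: i => [[->]|[|i]]. Qed.

Lemma F3 (S : nat -> bool) (T : table A) n : CS S T -> blk S T n -> size (cols T) = 1 ->
  exists G, dtree_for 2 T G /\ tree_cplx psi G n.
Proof.
move=> [_ [_ [Hr [Hu Hd]]]] [_ Hb].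
case Ec: (cols T) => [|f [|? ?]] // _.
have Hfn : f.1 = n by apply: Hb; rewrite Ec; left.
have [d0 Hd0] := dec_exists [:: 0] Hu Hd.
have [d1 Hd1] := dec_exists [:: 1] Hu Hd.
pose G := [:: Work f [:: (0, Term A d0); (1, Term A d1)]].
have HpG : forall w d, tpath G w d -> (w = [:: (f, 0)] /\ d = d0) \/ (w = [:: (f, 1)] /\ d = d1).
  move=> w d [t [[<-|[]] H]]; inversion H; subst.
  case: H2 => [[? ?]|[[? ?]|[]]]; subst; move/npath_term: H5 => [-> ->]; auto.
have Hpsi : forall w d, tpath G w d -> psi (map fst w) = n.
  by move=> w d /HpG [[-> _]|[-> _]].
exists G; split; last first.
  split; last by move=> w d /Hpsi ->.
  exists [:: (f, 0)], d0; split=> //.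
  exists (Work f [:: (0, Term A d0); (1, Term A d1)]); split; first by left.
  by apply: NPWork; [left | constructor].
split; last first.
  split => // t [<-|[]]; constructor => //= e t' [[_ <-]|[[_ <-]|[]]]; constructor.
split => //; split.
  move=> t [<-|[]]; constructor; first by rewrite Ec; left.
    by [].
  by move=> e t' [[<- <-]|[[<- <-]|[]]]; split => //; constructor.
split.
  move=> r Hr0; have [a [Ha Er]] := Hr _ Hr0; rewrite Ec /= in Er.
  exists [:: (f, a f)], (if a f == 0 then d0 else d1); split.
    exists (Work f [:: (0, Term A d0); (1, Term A d1)]); split; first by left.
    apply: NPWork; last by constructor.
    by move: (Ha f); case: (a f) => [|[|]] //= _; auto.
  move=> p [<-|[]]; exists 0; by rewrite Ec Er.
move=> r w d Hr0 /HpG Hp Hs; have [a [Ha Er]] := Hr _ Hr0; rewrite Ec /= in Er.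
have Hv : forall e, sat T r.1 [:: (f, e)] -> r.1 = [:: e].
  move=> e Hs'; have [i [Hi Hv]] := Hs' (f, e) (or_introl erefl).
  rewrite Ec in Hi; have [Ei _] := nth_error_single Hi; subst i.
  by rewrite Er /= in Hv *; rewrite Hv.
case: Hp Hs => [[-> ->]|[-> ->]] /Hv Hrv; [exact: Hd0 Hr0 Hrv | exact: Hd1 Hr0 Hrv].
Qed.

Open Scope fset_scope.


Fixpoint paths (t : node A) : seq (seq (A * nat) * nat) :=
  match t with
  | Term d => [:: ([::], d)]
  | Work f ch => flatten (map (fun p => map (fun q => ((f, p.1) :: q.1, q.2)) (paths p.2)) ch)
  end.

Lemma In_flatten_map (X : Type) (Y : eqType) (g : X -> seq Y) ch p x :
  List.In p ch -> x \in g p -> x \in flatten (map g ch).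
Proof.
elim: ch => [|q ch IH] //= [<-|Hp] Hx; rewrite mem_cat ?Hx //.
by rewrite IH ?orbT.
Qed.

Lemma npath_paths t w d : npath t w d -> (w, d) \in paths t.
Proof.
elim=> {t w d} [d|f ch e t w d Hin _ IH] /=; first by rewrite inE.
apply: (@In_flatten_map _ _ (fun p => map (fun q => ((f, p.1) :: q.1, q.2)) (paths p.2)) ch (e, t) _ Hin) => /=.
by apply/mapP; exists (w, d).
Qed.

Definition gpaths (G : seq (node A)) := flatten (map paths G).

Lemma tpath_gpaths G w d : tpath G w d -> (w, d) \in gpaths G.
Proof. move=> [t [Ht Hp]]; exact: In_flatten_map Ht (npath_paths Hp). Qed.

Definition satb (T : table A) (v : seq nat) (w : seq (A * nat)) : bool :=
  all (fun p => has (fun i => (List.nth_error (cols T) i == Some p.1) && (nth 0 v i == p.2))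
                  (iota 0 (size (cols T)))) w.

Lemma sat_satb T v w : sat T v w -> satb T v w.
Proof.
move=> H; apply/allP => p /In_mem /H [i [Hi Hv]].
apply/hasP; exists i; last by rewrite Hi Hv !eqxx.
have [Hs _] := nth_error_nth (0,0) Hi.
by rewrite mem_iota.
Qed.

Lemma fset1_neq0 (x : nat) : [fset x] != fset0.
Proof. by apply/fset0Pn; exists x; rewrite inE. Qed.

Definition T0 n : table A := Table [:: (n, 0)] [:: ([:: 0], [fset 0])].
Definition T2 n : table A := Table [:: (n, 0)] [:: ([:: 0], [fset 0]); ([:: 1], [fset 1])].
Definition T1 n : table A := Table [:: (n, 0); (n, 1); (n, 2)]
  [:: ([:: 1; 0; 0], [fset 0]); ([:: 0; 1; 0], [fset 1]); ([:: 0; 0; 1], [fset 2])].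

Lemma blk_T0 (S : nat -> bool) n : S n -> blk S (T0 n) n.
Proof. by move=> Sn; split=> // f [<-|[]]. Qed.
Lemma blk_T2 (S : nat -> bool) n : S n -> blk S (T2 n) n.
Proof. by move=> Sn; split=> // f [<-|[]]. Qed.
Lemma blk_T1 (S : nat -> bool) n : S n -> blk S (T1 n) n.
Proof. by move=> Sn; split=> // f [<-|[<-|[<-|[]]]]. Qed.

Lemma CS_T0 (S : nat -> bool) n : S n -> CS S (T0 n).
Proof.
move=> Sn; split=> //; split; first by exists n; exact: blk_T0.
split; first by move=> r; rewrite inE => /eqP -> /=; exists (fun _ => 0).
split=> // r; rewrite inE => /eqP -> /=; exact: fset1_neq0.
Qed.

Lemma CS_T2 (S : nat -> bool) n : S n -> CS S (T2 n).
Proof.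
move=> Sn; split=> //; split; first by exists n; exact: blk_T2.
split; first by move=> r; rewrite !inE => /orP [/eqP ->|/eqP ->] /=;
  [exists (fun _ => 0) | exists (fun _ => 1)].
split=> // r; rewrite !inE => /orP [/eqP ->|/eqP ->] /=; exact: fset1_neq0.
Qed.

Lemma CS_T1 (S : nat -> bool) n : S n -> CS S (T1 n).
Proof.
move=> Sn; split=> //; split; first by exists n; exact: blk_T1.
split; first by move=> r; rewrite !inE => /or3P [/eqP ->|/eqP ->|/eqP ->] /=;
  [exists (fun f => nat_of_bool (f.2 == 0)) | exists (fun f => nat_of_bool (f.2 == 1))
  | exists (fun f => nat_of_bool (f.2 == 2))]; split => // f; case: (_ == _).
split=> // r; rewrite !inE => /or3P [/eqP ->|/eqP ->|/eqP ->] /=; exact: fset1_neq0.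
Qed.

Lemma word_cases (w : seq (A * nat)) : w = [::] \/ (exists p, w = [:: p]) \/ 1 < size w.
Proof. case: w => [|p [|q w]]; auto; right; left; by exists p. Qed.

Lemma single_path_same (t : node A) (f1 f2 : A) e1 d1 e2 d2 :
  npath t [:: (f1, e1)] d1 -> npath t [:: (f2, e2)] d2 -> f1 = f2.
Proof. move=> H1 H2; inversion H1; inversion H2; subst; congruence. Qed.

Lemma det_lb3 (S : nat -> bool) (T : table A) n r1 r2 r3 G m :
  blk S T n -> r1 \in rows T -> r2 \in rows T -> r3 \in rows T ->
  (forall d, d \in r1.2 -> d \in r2.2 -> False) ->
  (forall d, d \in r1.2 -> d \in r3.2 -> False) ->
  (forall d, d \in r2.2 -> d \in r3.2 -> False) ->
  (forall p, nth 0 r1.1 p <= 1) -> (forall p, nth 0 r2.1 p <= 1) -> (forall p, nth 0 r3.1 p <= 1) ->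
  dtree_for 2 T G -> tree_cplx psi G m -> n.+1 <= m.
Proof.
move=> [_ Hb] H1 H2 H3 D12 D13 D23 V1 V2 V3 [Hnd [Hsz _]] [_ Hall].
have [_ [_ [Hcov Hcor]]] := Hnd.
case: G Hsz Hnd Hcov Hcor Hall => [|t [|? ?]] // _ Hnd Hcov Hcor Hall.
have Hlen : forall w d, tpath [:: t] w d -> 1 < size w -> n.+1 <= m.
  move=> w d Hp Hs; have := Hall _ _ Hp.
  rewrite (psi_blk (n := n)); last by move=> f /(tree_letters Hnd Hp) /Hb.
  by case: w Hp Hs => [|? [|? ?]].
have Hnil : forall ri rj, ri \in rows T -> rj \in rows T ->
    (forall d, d \in ri.2 -> d \in rj.2 -> False) -> forall w d, tpath [:: t] w d ->
    sat T ri.1 w -> sat T rj.1 w -> False.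
  move=> ri rj Hi Hj D w d Hp Si Sj.
  exact: D (Hcor _ _ _ Hi Hp Si) (Hcor _ _ _ Hj Hp Sj).
have [w1 [d1 [P1 S1]]] := Hcov _ H1.
have [w2 [d2 [P2 S2]]] := Hcov _ H2.
have [w3 [d3 [P3 S3]]] := Hcov _ H3.
case: (word_cases w1) => [E1|[[p1 E1]|L1]]; last exact: Hlen P1 L1.
  by subst w1; exfalso; exact: Hnil _ _ H1 H2 D12 _ _ P1 S1 (sat_nil _ _).
case: (word_cases w2) => [E2|[[p2 E2]|L2]]; last exact: Hlen P2 L2.
  by subst w2; exfalso; exact: Hnil _ _ H1 H2 D12 _ _ P2 (sat_nil _ _) S2.
case: (word_cases w3) => [E3|[[p3 E3]|L3]]; last exact: Hlen P3 L3.
  by subst w3; exfalso; exact: Hnil _ _ H1 H3 D13 _ _ P3 (sat_nil _ _) S3.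
subst w1 w2 w3; case: p1 P1 S1 => f1 e1 P1 S1; case: p2 P2 S2 => f2 e2 P2 S2;
  case: p3 P3 S3 => f3 e3 P3 S3.
have N1 : forall f e d, tpath [:: t] [:: (f, e)] d -> npath t [:: (f, e)] d.
  by move=> f e d [t' [[<-|[]] H]].
have E12 := single_path_same (N1 _ _ _ P1) (N1 _ _ _ P2).
have E13 := single_path_same (N1 _ _ _ P1) (N1 _ _ _ P3).
subst f2 f3.
have Ve : forall (r : seq nat * {fset nat}) (e : nat), (forall p, nth 0 r.1 p <= 1) -> sat T r.1 [:: (f1, e)] -> e <= 1.
  move=> r e V Sr; have [i [_ Hi]] := Sr _ (or_introl erefl); rewrite -[e]/((f1, e).2) -Hi; exact: V.
have e1l := Ve _ _ V1 S1; have e2l := Ve _ _ V2 S2; have e3l := Ve _ _ V3 S3.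
have : e1 = e2 \/ e1 = e3 \/ e2 = e3 by lia.
case=> [E|[E|E]]; subst.
- exfalso; exact: Hnil _ _ H1 H2 D12 _ _ P1 S1 S2.
- exfalso; exact: Hnil _ _ H1 H3 D13 _ _ P1 S1 S3.
- exfalso; exact: Hnil _ _ H2 H3 D23 _ _ P2 S2 S3.
Qed.

Lemma T0_rows n : forall r, r \in rows (T0 n) -> 0 \in r.2.
Proof. by move=> r; rewrite inE => /eqP -> /=; rewrite inE. Qed.

Lemma T0_d n : psi_d 2 psi (T0 n) 0.
Proof.
have [H1 H2] := @trivial_tree (T0 n) 0 (@T0_rows n).
by split; [exists [:: Term A 0] | ].
Qed.

Lemma T0_a n : psi_a 2 psi (T0 n) 0.
Proof.
have [[H1 _] H2] := @trivial_tree (T0 n) 0 (@T0_rows n).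
by split; [exists [:: Term A 0] | ].
Qed.

Lemma disj01 (x y : nat) : x != y -> forall d, d \in [fset x] -> d \in [fset y] -> False.
Proof. by move=> /negP H d; rewrite !inE => /eqP -> /eqP E; apply: H; rewrite E. Qed.

Lemma T2_d (S : nat -> bool) n : S n -> psi_d 2 psi (T2 n) n.
Proof.
move=> Sn; have [G [HG Hc]] := F3 (CS_T2 Sn) (blk_T2 Sn) erefl.
split; first by exists G.
move=> G' m' [H' _] Hc'.
apply: (L_nonempty (r1 := ([:: 0], [fset 0])) (r2 := ([:: 1], [fset 1])) (blk_T2 Sn) _ _ _ H' Hc');
  rewrite ?inE ?eqxx ?orbT //; exact: disj01.
Qed.

Lemma T2_a (S : nat -> bool) n : S n -> psi_a 2 psi (T2 n) n.
Proof.
move=> Sn; have [G [[HG _] Hc]] := F3 (CS_T2 Sn) (blk_T2 Sn) erefl.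
split; first by exists G.
move=> G' m' H' Hc'.
apply: (L_nonempty (r1 := ([:: 0], [fset 0])) (r2 := ([:: 1], [fset 1])) (blk_T2 Sn) _ _ _ H' Hc');
  rewrite ?inE ?eqxx ?orbT //; exact: disj01.
Qed.

Lemma opt_pair_eq (n a b : nat) : (Some (n, a) == Some (n, b) :> option A) = (a == b).
Proof. by apply/eqP/eqP => [[]|->]. Qed.

Definition GA n : seq (node A) :=
  [:: Work (n, 0) [:: (1, Term A 0)]; Work (n, 1) [:: (1, Term A 1)]; Work (n, 2) [:: (1, Term A 2)]].

Lemma GA_ok n : ndtree_for 2 (T1 n) (GA n) /\ tree_cplx psi (GA n) n.
Proof.
split; last first.
  split.
    exists [:: ((n, 0), 1)], 0; split => //.
    exists (Work (n, 0) [:: (1, Term A 0)]); split; [left | apply: NPWork; [left| constructor]] => //.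
  by move=> w d /tpath_gpaths; rewrite /= !inE => /or3P [/eqP [-> _]|/eqP [-> _]|/eqP [-> _]].
split => //; split.
  move=> t [<-|[<-|[<-|[]]]]; constructor => //=; auto;
    move=> e t' [[<- <-]|[]]; split => //; constructor.
split.
  move=> r; rewrite !inE => /or3P [/eqP ->|/eqP ->|/eqP ->].
  - exists [:: ((n, 0), 1)], 0; split; last by move=> p [<-|[]]; exists 0.
    exists (Work (n, 0) [:: (1, Term A 0)]); split; [left | apply: NPWork; [left| constructor]] => //.
  - exists [:: ((n, 1), 1)], 1; split; last by move=> p [<-|[]]; exists 1.
    exists (Work (n, 1) [:: (1, Term A 1)]); split; [right; left | apply: NPWork; [left| constructor]] => //.
  - exists [:: ((n, 2), 1)], 2; split; last by move=> p [<-|[]]; exists 2.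
    exists (Work (n, 2) [:: (1, Term A 2)]); split; [right; right; left | apply: NPWork; [left| constructor]] => //.
move=> r w d Hr /tpath_gpaths Hp /sat_satb Hs; move: Hr Hp Hs.
rewrite /= !inE => /or3P [/eqP ->|/eqP ->|/eqP ->] /or3P [/eqP [-> ->]|/eqP [-> ->]|/eqP [-> ->]];
  rewrite /satb /= ?opt_pair_eq ?eqxx //= ?inE //.
Qed.

Definition GD n : seq (node A) :=
  [:: Work (n, 0) [:: (1, Term A 0); (0, Work (n, 1) [:: (1, Term A 1); (0, Term A 2)])]].

Lemma GD_ok n : dtree_for 2 (T1 n) (GD n) /\ tree_cplx psi (GD n) n.+1.
Proof.
split; last first.
  split.
    exists [:: ((n, 0), 0); ((n, 1), 1)], 1; split => //.
    eexists; split; first by left.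
    apply: NPWork; first by right; left.
    by apply: NPWork; [left | constructor].
  by move=> w d /tpath_gpaths; rewrite /= !inE => /or3P [/eqP [-> _]|/eqP [-> _]|/eqP [-> _]].
split; last first.
  split => // t [<-|[]]; constructor => //= e t' [[_ <-]|[[_ <-]|[]]]; constructor => //.
    by move=> e' t'' [[_ <-]|[[_ <-]|[]]]; constructor.
split => //; split.
  move=> t [<-|[]]; constructor => //=; auto.
  move=> e t' [[<- <-]|[[<- <-]|[]]]; split => //; constructor => //=; auto.
  by move=> e' t'' [[<- <-]|[[<- <-]|[]]]; split => //; constructor.
split.
  move=> r; rewrite !inE => /or3P [/eqP ->|/eqP ->|/eqP ->].
  - exists [:: ((n, 0), 1)], 0; split; last by move=> p [<-|[]]; exists 0.
    eexists; split; first by left.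
    by apply: NPWork; [left | constructor].
  - exists [:: ((n, 0), 0); ((n, 1), 1)], 1; split; last by move=> p [<-|[<-|[]]]; [exists 0|exists 1].
    eexists; split; first by left.
    apply: NPWork; first by right; left.
    by apply: NPWork; [left | constructor].
  - exists [:: ((n, 0), 0); ((n, 1), 0)], 2; split; last by move=> p [<-|[<-|[]]]; [exists 0|exists 1].
    eexists; split; first by left.
    apply: NPWork; first by right; left.
    by apply: NPWork; [right; left | constructor].
move=> r w d Hr /tpath_gpaths Hp /sat_satb Hs; move: Hr Hp Hs.
rewrite /= !inE => /or3P [/eqP ->|/eqP ->|/eqP ->] /or3P [/eqP [-> ->]|/eqP [-> ->]|/eqP [-> ->]];
  rewrite /satb /= ?opt_pair_eq ?eqxx //= ?inE //.
Qed.

Lemma le1_3 a b c : a <= 1 -> b <= 1 -> c <= 1 -> forall p, nth 0 [:: a; b; c] p <= 1.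
Proof. by move=> Ha Hb Hc [|[|[|p]]] //=; rewrite nth_nil. Qed.

Lemma T1_d (S : nat -> bool) n : S n -> psi_d 2 psi (T1 n) n.+1.
Proof.
move=> Sn; have [HG Hc] := GD_ok n.
split; first by exists (GD n).
move=> G' m' H' Hc'.
apply: (det_lb3 (r1 := ([:: 1; 0; 0], [fset 0])) (r2 := ([:: 0; 1; 0], [fset 1]))
  (r3 := ([:: 0; 0; 1], [fset 2])) (blk_T1 Sn) _ _ _ _ _ _ _ _ _ H' Hc');
  rewrite ?inE ?eqxx ?orbT //; try exact: disj01; exact: le1_3.
Qed.

Lemma T1_a (S : nat -> bool) n : S n -> psi_a 2 psi (T1 n) n.
Proof.
move=> Sn; have [HG Hc] := GA_ok n.
split; first by exists (GA n).
move=> G' m' H' Hc'.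
apply: (L_nonempty (r1 := ([:: 1; 0; 0], [fset 0])) (r2 := ([:: 0; 1; 0], [fset 1])) (blk_T1 Sn) _ _ _ H' Hc');
  rewrite ?inE ?eqxx ?orbT //; exact: disj01.
Qed.

Close Scope fset_scope.



Lemma maxP (P : nat -> Prop) B : (exists x, P x) -> (forall x, P x -> x <= B) ->
  exists v, P v /\ forall x, P x -> x <= v.
Proof.
elim: B => [|B IH] [x0 Hx0] HB.
  exists 0; split; last by move=> x /HB; rewrite leqn0 => /eqP ->.
  by have := HB _ Hx0; rewrite leqn0 => /eqP <-.
case: (classic (P B.+1)) => [HP|HP]; first by exists B.+1.
apply: IH; first by exists x0.
move=> x Hx; have := HB _ Hx; rewrite leq_eqVlt => /orP [/eqP E|//].
by subst x.
Qed.

Section Types.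
Variable S : nat -> bool.
Hypothesis HS0 : forall k, S k -> 0 < k.
Hypothesis Hinf : forall N, exists n, N <= n /\ S n.

Local Notation UU := (U 2 (CS S) psi).
Local Notation US := (Uset 2 (CS S) psi).

Lemma U_max b c m : (exists x, US b c m x) -> (forall x, US b c m x -> x <= m.+1) ->
  exists v, UU b c m v.
Proof. by move=> H1 H2; have [v [Hv Hmax]] := maxP H1 H2; exists v. Qed.

Lemma Umm b c m : (forall v, US b c m v -> v <= m) -> US b c m m -> UU b c m m.
Proof. by move=> H1 H2; split. Qed.

Lemma gamma_of b c : (forall N, exists m, N <= m /\ UU b c m m) -> has_typ (UU b c) TGamma.
Proof.
move=> H; split=> N; have [m [Hm HU]] := H N; exists m; split => //; exists m; split => //.
Qed.

Lemma diag b m : (exists T, CS S T /\ cplx 2 psi b T m) -> UU b b m m.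
Proof.
move=> [T [HT Hc]]; apply: Umm; last by exists T; split => //; split => //; exists m.
by move=> v [T' [_ [Hv [m' [Hm' Hle]]]]]; rewrite (cplx_uniq Hv Hm').
Qed.

Lemma psi_T0 n : psi (cols (T0 n)) = n. Proof. by []. Qed.
Lemma psi_T2 n : psi (cols (T2 n)) = n. Proof. by []. Qed.
Lemma psi_T1 n : psi (cols (T1 n)) = n.+1. Proof. by []. Qed.

Lemma typ_ii : has_typ (UU MI MI) TGamma.
Proof.
apply: gamma_of => N; have [n [Hn Sn]] := Hinf N; exists n; split => //.
by apply: diag; exists (T0 n); split; [exact: CS_T0|].
Qed.

Lemma typ_dd : has_typ (UU MD MD) TGamma.
Proof.
apply: gamma_of => N; have [n [Hn Sn]] := Hinf N; exists n.+1; split; first by lia.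
by apply: diag; exists (T1 n); split; [exact: CS_T1| exact: (T1_d Sn)].
Qed.

Lemma typ_aa : has_typ (UU MA MA) TGamma.
Proof.
apply: gamma_of => N; have [n [Hn Sn]] := Hinf N; exists n; split => //.
by apply: diag; exists (T1 n); split; [exact: CS_T1| exact: (T1_a Sn)].
Qed.

Lemma typ_iX c : c <> MI -> has_typ (UU MI c) TEps.
Proof.
move=> Hc; exists 0 => m [v [_ Hmax]].
have [n [Hn Sn]] := Hinf v.+1.
have : US MI c m n.
  exists (T0 n); split; first exact: CS_T0.
  split => //; exists 0; split => //.
  by case: c Hc {Hmax} => //= _; [exact: T0_d | exact: T0_a].
by move/Hmax; lia.
Qed.

Lemma blk_of T : CS S T -> exists n, blk S T n.
Proof. by case=> _ []. Qed.

Lemma psi_cols T n : CS S T -> blk S T n ->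
  psi (cols T) = if size (cols T) == 1 then n else n.+1.
Proof.
move=> [H0 _] [_ Hb]; rewrite (psi_blk (n := n)) //.
by case: (cols T) H0 => [|? [|? ?]].
Qed.

Lemma typ_ad : has_typ (UU MA MD) TGamma.
Proof.
apply: gamma_of => N; have [n [Hn Sn]] := Hinf N; exists n; split => //.
apply: Umm.
  by move=> v [T [_ [Hv [m' [Hm' Hle]]]]]; have := a_le_d Hv Hm'; lia.
exists (T2 n); split; first exact: CS_T2.
by split; [exact: (T2_a Sn) | exists n; split => //; exact: (T2_d Sn)].
Qed.

Lemma bound_Xi b T v p : b <> MI -> CS S T -> cplx 2 psi b T v -> psi (cols T) = p -> v <= p.
Proof.
move=> Hb HT Hv <-; have [n Hbl] := blk_of HT.
rewrite (psi_cols HT Hbl); case: eqP => Hs.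
- have [G [HG Hc]] := F3 HT Hbl Hs.
  case: b Hb Hv => //= _ [_ Hmin]; [exact: Hmin HG Hc | exact: Hmin _ _ HG.1 Hc].
- by case: (cplx_vals Hbl Hb Hv) => [->|[->|->]].
Qed.

Lemma typ_di : has_typ (UU MD MI) TGamma.
Proof.
apply: gamma_of => N; have [n [Hn Sn]] := Hinf N; exists n.+1; split; first by lia.
apply: Umm.
  by move=> v [T [HT [Hv [m' [Hm' Hle]]]]]; have := bound_Xi (b := MD) ltac:(done) HT Hv Hm'; lia.
exists (T1 n); split; first exact: CS_T1.
by split; [exact: (T1_d Sn) | exists n.+1; split].
Qed.

Lemma typ_ai : has_typ (UU MA MI) TGamma.
Proof.
apply: gamma_of => N; have [n [Hn Sn]] := Hinf N; exists n; split => //.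
apply: Umm.
  by move=> v [T [HT [Hv [m' [Hm' Hle]]]]]; have := bound_Xi (b := MA) ltac:(done) HT Hv Hm'; lia.
exists (T2 n); split; first exact: CS_T2.
by split; [exact: (T2_a Sn) | exists n; split].
Qed.

Lemma da_bound m v : US MD MA m v ->
  v = 0 \/ exists n, S n /\ n <= m /\ v <= n.+1.
Proof.
move=> [T [HT [Hv [a [Ha Hle]]]]]; have [n Hbl] := blk_of HT.
have Hvv := cplx_vals Hbl (b := MD) ltac:(done) Hv.
case: (cplx_vals Hbl (b := MA) ltac:(done) Ha) => Ea.
  by left; subst a; exact: F2 HS0 HT Hbl Ha Hv.
right; exists n; split; first by case: Hbl.
by case: Ea => Ea; case: Hvv => [Hvv|[Hvv|Hvv]]; lia.
Qed.

Lemma da_nonempty m : exists x, US MD MA m x.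
Proof.
have [n [_ Sn]] := Hinf 0; exists 0, (T0 n); split; first exact: CS_T0.
by split; [exact: T0_d | exists 0; split => //; exact: T0_a].
Qed.

Lemma da_T1 n : S n -> US MD MA n n.+1.
Proof.
move=> Sn; exists (T1 n); split; first exact: CS_T1.
by split; [exact: (T1_d Sn) | exists n; split => //; exact: (T1_a Sn)].
Qed.

Lemma typ_da5 : (forall N, exists m, N <= m /\ ~~ S m) -> has_typ (UU MD MA) TGamma.
Proof.
move=> Hco; split => N.
- have [n [Hn Sn]] := Hinf N.
  have Hb : forall x, US MD MA n x -> x <= n.+1.
    by move=> x /da_bound [->//|[k [Sk [Hk Hx]]]]; lia.
  have [v [Hv Hmax]] := maxP (da_nonempty n) Hb.
  exists n; split => //; exists v; split; first by split.
  by have := Hmax _ (da_T1 Sn); lia.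
- have [m [Hm Sm]] := Hco N.
  have Hb : forall x, US MD MA m x -> x <= m.
    move=> x /da_bound [->//|[k [Sk [Hk Hx]]]].
    have : k != m by apply/eqP => E; subst k; rewrite Sk in Sm.
    lia.
  have [v [Hv Hmax]] := maxP (da_nonempty m) Hb.
  exists m; split => //; exists v; split; [by split | exact: Hb].
Qed.

Lemma typ_da6 : (forall n, 0 < n -> S n) -> has_typ (UU MD MA) TDelta.
Proof.
move=> Hall; split => [N|].
- have Hb : forall x, US MD MA N x -> x <= N.+1.
    by move=> x /da_bound [->//|[k [Sk [Hk Hx]]]]; lia.
  have [v [Hv Hmax]] := maxP (da_nonempty N) Hb.
  by exists N; split => //; exists v; split.
- exists 1 => m [v [[Hv Hmax] Hvm]].
  case: (posnP m) => [->//|Hm].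
  by have := Hmax _ (da_T1 (Hall _ Hm)); lia.
Qed.

End Types.



Lemma typ_t5 (S : nat -> bool) : (forall k, S k -> 0 < k) -> (forall N, exists n, N <= n /\ S n) ->
  (forall N, exists m, N <= m /\ ~~ S m) -> typ_u_is 2 (CS S) psi t5.
Proof.
move=> H0 Hi Hc [] [] /=.
all: first [exact: typ_ii Hi | exact: typ_dd Hi | exact: typ_aa Hi | exact: typ_iX Hi
  | exact: typ_ad Hi | exact: typ_di Hi | exact: typ_ai Hi | exact: typ_da5 H0 Hi Hc | exact: (@typ_iX S Hi MD ltac:(done)) | exact: (@typ_iX S Hi MA ltac:(done))].
Qed.

Lemma typ_t6 (S : nat -> bool) : (forall k, S k -> 0 < k) -> (forall n, 0 < n -> S n) ->
  typ_u_is 2 (CS S) psi t6.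
Proof.
move=> H0 Ha; have Hi : forall N, exists n, N <= n /\ S n.
  by move=> N; exists N.+1; split => //; apply: Ha.
move=> [] [] /=.
all: first [exact: typ_ii Hi | exact: typ_dd Hi | exact: typ_aa Hi
  | exact: typ_ad Hi | exact: typ_di Hi | exact: typ_ai Hi | exact: typ_da6 H0 Hi Ha
  | exact: (@typ_iX S Hi MD ltac:(done)) | exact: (@typ_iX S Hi MA ltac:(done))].
Qed.

Lemma CS_union (S1 S2 : nat -> bool) T : CS (fun n => S1 n || S2 n) T <-> CS S1 T \/ CS S2 T.
Proof.
split.
- move=> [H0 [[n [Sn Hb]] R]]; case/orP: Sn => Sn; [left|right]; split => //; split => //; by exists n.
- by case=> [[H0 [[n [Sn Hb]] R]]|[H0 [[n [Sn Hb]] R]]]; split => //; split => //;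
    exists n; split => //; rewrite Sn ?orbT.
Qed.

Lemma part (S1 S2 : nat -> bool) (t : cm -> cm -> typ) :
  (forall n, S1 n -> S2 n -> False) -> (exists n, S1 n) -> (exists n, S2 n) ->
  typ_u_is 2 (CS S1) psi t5 -> typ_u_is 2 (CS S2) psi t5 ->
  typ_u_is 2 (CS (fun n => S1 n || S2 n)) psi t ->
  exists (A : Type)
     (k1 : nat) (F1 : A -> Prop) (C1 : table A -> Prop) (psi1 : seq A -> nat)
     (k2 : nat) (F2 : A -> Prop) (C2 : table A -> Prop) (psi2 : seq A -> nat)
     (C : table A -> Prop) (psi : seq A -> nat),
     tpair k1 F1 C1 psi1 /\ tpair k2 F2 C2 psi2 /\ compatible F1 F2 psi1 psi2 /\
     is_union k1 F1 C1 psi1 k2 F2 C2 psi2 C psi /\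
     typ_u_is k1 C1 psi1 t5 /\ typ_u_is k2 C2 psi2 t5 /\
     typ_u_is (maxn k1 k2) C psi t.
Proof.
move=> Hd [n1 Hn1] [n2 Hn2] T1 T2 T.
exists A, 2, (fun f : A => S1 f.1), (CS S1), psi, 2, (fun f : A => S2 f.1), (CS S2), psi,
  (CS (fun n => S1 n || S2 n)), psi.
split; first by split => //; split; [exists (n1, 0) | exact: CS_closed].
split; first by split => //; split; [exists (n2, 0) | exact: CS_closed].
split; first by split => // f; exact: Hd.
split => //; split.
  split => //; split; first by exists (n1, 0); left.
  by apply: CS_closed => f /orP [H|H]; [left|right].
by split => // T'; exact: CS_union.
Qed.


Theorem proposition6 :
  (exists (A : Type)
     (k1 : nat) (F1 : A -> Prop) (C1 : table A -> Prop) (psi1 : seq A -> nat)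
     (k2 : nat) (F2 : A -> Prop) (C2 : table A -> Prop) (psi2 : seq A -> nat)
     (C : table A -> Prop) (psi : seq A -> nat),
     tpair k1 F1 C1 psi1 /\ tpair k2 F2 C2 psi2 /\ compatible F1 F2 psi1 psi2 /\
     is_union k1 F1 C1 psi1 k2 F2 C2 psi2 C psi /\
     typ_u_is k1 C1 psi1 t5 /\ typ_u_is k2 C2 psi2 t5 /\
     typ_u_is (maxn k1 k2) C psi t5)
  /\
  (exists (A : Type)
     (k1 : nat) (F1 : A -> Prop) (C1 : table A -> Prop) (psi1 : seq A -> nat)
     (k2 : nat) (F2 : A -> Prop) (C2 : table A -> Prop) (psi2 : seq A -> nat)
     (C : table A -> Prop) (psi : seq A -> nat),
     tpair k1 F1 C1 psi1 /\ tpair k2 F2 C2 psi2 /\ compatible F1 F2 psi1 psi2 /\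
     is_union k1 F1 C1 psi1 k2 F2 C2 psi2 C psi /\
     typ_u_is k1 C1 psi1 t5 /\ typ_u_is k2 C2 psi2 t5 /\
     typ_u_is (maxn k1 k2) C psi t6).
Proof.
split.
- pose S1 n := (n %% 4 == 0) && (0 < n); pose S2 n := n %% 4 == 2.
  have Hco : forall (S : nat -> bool), (forall n, S n -> (n %% 4 == 0) || (n %% 4 == 2)) ->
      forall N, exists m, N <= m /\ ~~ S m.
    move=> S HS N; exists (4 * N + 1); split; first by lia.
    by apply/negP => /HS; lia.
  apply: (part (S1 := S1) (S2 := S2)).
  + by move=> n; rewrite /S1 /S2; lia.
  + by exists 4.
  + by exists 2.
  + apply: typ_t5; first by move=> k /andP [].
    * by move=> N; exists (4 * N.+1); split; rewrite /S1; lia.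
    * by apply: Hco => n /andP [-> _].
  + apply: typ_t5; first by rewrite /S2 => k; lia.
    * by move=> N; exists (4 * N + 2); split; rewrite /S2; lia.
    * by apply: Hco => n; rewrite /S2 => ->; rewrite orbT.
  + apply: typ_t5.
    * by rewrite /S1 /S2 => k /orP [/andP [] //|]; lia.
    * by move=> N; exists (4 * N.+1); split; rewrite /S1 /S2; lia.
    * by apply: Hco => n; rewrite /S1 /S2 => /orP [/andP [-> _]|->]; rewrite ?orbT.
- pose S1 n := ~~ odd n && (0 < n); pose S2 n := odd n.
  apply: (part (S1 := S1) (S2 := S2)).
  + by rewrite /S1 /S2 => n /andP [/negP H _].
  + by exists 2.
  + by exists 1.
  + apply: typ_t5; first by move=> k /andP [].
    * by move=> N; exists (N.+1).*2; rewrite /S1 odd_double -!muln2; split; lia.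
    * by move=> N; exists (N.*2.+1); rewrite /S1 /= odd_double -!muln2; split; lia.
  + apply: typ_t5; first by rewrite /S2 => -[].
    * by move=> N; exists (N.*2.+1); rewrite /S2 /= odd_double -!muln2; split; lia.
    * by move=> N; exists (N.+1).*2; rewrite /S2 odd_double -!muln2; split; lia.
  + apply: typ_t6.
    * by rewrite /S1 /S2 => -[|k] //; case: (odd _).
    * by rewrite /S1 /S2 => n ->; case: (odd n).
Qed.
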